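(* Let $A(x)=\sum_{n\ge0}a_nx^n$ and $B(x)=\sum_{k\ge0}b_kx^k$ be formal power series over a field of characteristic $0$, and assume that either $B$ is a polynomial or $a_0=0$ (so that $B(A(x))=\sum_k b_kA(x)^k$ is a well-defined formal power series). Suppose $B(A(x))=x$. Then $a_1\ne0$ and for every $n\ge2$, \[ a_n=-a_1\sum_{k\ge1}b_k\,t^{(k)}_n , \] where the sum has only finitely many nonzero terms.
   Context: For a sequence $(a_n)_{n\ge0}$ with generating function $A(x)=\sum_{n\ge0}a_nx^n$, set $a^{(k)}_n=[x^n]A(x)^k$ for $k\ge1$, $n\ge0$. The truncated convolution powers $t^{(k)}_n$ ($k\ge1$, $n\ge0$) are defined recursively by $t^{(1)}_n=0$ for all $n$, and for $k>1$ \[ t^{(k)}_n=\sum_{j=1}^{n-1}a_{n-j}\,a^{(k-1)}_j+a_0\,t^{(k-1)}_n \] (the sum being empty when $n\le1$). *)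

(* Defs.v *)
(* Formal power series over R are represented by their
   coefficient sequences nat -> R. *)
From HB Require Import structures.
From mathcomp Require Import all_boot all_order all_algebra.
Set Implicit Arguments. Unset Strict Implicit. Unset Printing Implicit Defensive.
Import Order.TTheory GRing.Theory Num.Theory.
Local Open Scope ring_scope.

(* acp a k n = a^{(k)}_n = [x^n] A(x)^k  (with A^0 = 1). *)
Fixpoint acp (R : nzRingType) (a : nat -> R) (k n : nat) : R :=
  match k with
  | 0 => (n == 0%N)%:R
  | k'.+1 => \sum_(j < n.+1) a j * acp a k' (n - j)
  end.

(* tcp a k n = t^{(k)}_n : t^{(1)}_n = 0 and for k > 1
   t^{(k)}_n = sum_{j=1}^{n-1} a_{n-j} a^{(k-1)}_j + a_0 t^{(k-1)}_n.
   (The value at k = 0 is irrelevant and set to 0.) *)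
Fixpoint tcp (R : nzRingType) (a : nat -> R) (k n : nat) : R :=
  match k with
  | 0 => 0
  | k'.+1 =>
      if k' == 0%N then 0
      else \sum_(1 <= j < n) a (n - j)%N * acp a k' j + a 0%N * tcp a k' n
  end.

(* B(A(x)) = x, coefficientwise: for each n, the series
   sum_k b_k a^{(k)}_n has finite support and its sum is [n == 1]. *)
Definition comp_is_x (R : nzRingType) (a b : nat -> R) : Prop :=
  forall n : nat, exists N : nat,
    (forall k, (N < k)%N -> b k * acp a k n = 0) /\
    \sum_(k < N.+1) b k * acp a k n = (n == 1%N)%:R.

(* Main.v *)
Require Import Defs.
From HB Require Import structures.
From mathcomp Require Import all_boot all_order all_algebra.
From mathcomp Require Import ring.
Import Order.TTheory GRing.Theory Num.Theory.
Local Open Scope ring_scope.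

Section Aux.
Variable R : nzRingType.
Variable a : nat -> R.

Lemma acp0 k : acp a k 0 = a 0%N ^+ k.
Proof.
elim: k => [|k IH] /=; first by rewrite expr0.
by rewrite big_ord1 subnn IH exprS.
Qed.

Lemma acp_split k n : (0 < n)%N ->
  acp a k.+1 n = a n * a 0%N ^+ k
     + \sum_(1 <= j < n) a (n - j)%N * acp a k j + a 0%N * acp a k n.
Proof.
move=> n0 /=.
rewrite -(big_mkord xpredT (fun j => a j * acp a k (n - j))).
rewrite big_nat_rev /= big_nat_recr //= add0n subnn !subn0.
rewrite big_ltn // subSS !subn0 subnn acp0.
congr (_ + _ + _).
apply: eq_big_nat => j /andP[j1 jn].
rewrite subSS; congr (a _ * acp a k _).
by rewrite subKn // ltnW.
Qed.

Lemma tcp1 k : tcp a k 1 = 0.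
Proof.
elim: k => [|k IH] //=; case: ifP => // _.
by rewrite big_geq // IH mulr0 addr0.
Qed.

Lemma sum_ext (F : nat -> R) N M : (N <= M)%N -> (forall k, (N < k)%N -> F k = 0) ->
  \sum_(k < M.+1) F k = \sum_(k < N.+1) F k.
Proof.
move=> NM HF.
rewrite -!(big_mkord xpredT) [LHS](@big_cat_nat _ _ _ N.+1) //=.
rewrite [X in _ + X]big_nat_cond [X in _ + X]big1 ?addr0 // => k /andP[/andP[Hk _] _].
exact: HF.
Qed.

End Aux.

Lemma acp_tcp (R : comNzRingType) (a : nat -> R) k n : (0 < n)%N ->
  acp a k n = tcp a k n + k%:R * a 0%N ^+ k.-1 * a n.
Proof.
move=> n0; elim: k => [|k IH].
  by rewrite /= mul0r mul0r addr0; case: n n0.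
rewrite acp_split //.
case: k IH => [|k] IH.
  rewrite /= big1_seq ?subn0; last first.
    move=> j /andP[_]; rewrite mem_index_iota => /andP[j1 _] /=.
    by case: j j1 => // j _; rewrite mulr0.
  have -> : (n == 0%N) = false by case: (n) n0.
  by rewrite /= mulr0n mulr0 !addr0 !expr0 !mulr1 add0r mul1r.
rewrite IH /=.
have -> : ((k.+2)%:R : R) = (k.+1)%:R + 1 by rewrite -addn1 natrD.
rewrite exprS; ring.
Qed.

Theorem theorem1 (R : fieldType) (HR : [pchar R] =i pred0)
  (a b : nat -> R)
  (Hwd : (exists d : nat, forall k, (d < k)%N -> b k = 0) \/ a 0%N = 0)
  (Hcomp : comp_is_x a b) :
  a 1%N != 0 /\
  forall n : nat, (2 <= n)%N ->
    exists N : nat,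
      (forall k, (N < k)%N -> b k * tcp a k n = 0) /\
      a n = - a 1%N * \sum_(1 <= k < N.+1) b k * tcp a k n.
Proof.
pose c k := b k * (k%:R * a 0%N ^+ k.-1).
have bc1 k : b k * acp a k 1 = c k * a 1%N.
  by rewrite acp_tcp // tcp1 add0r /c !mulrA.
have [N1 [H1t H1s]] := Hcomp 1%N.
have C1 : (\sum_(k < N1.+1) c k) * a 1%N = 1.
  rewrite -[1 in RHS]/((1%N == 1%N)%:R) -H1s mulr_suml; apply: eq_bigr => k _; by rewrite bc1.
have a1 : a 1%N != 0.
  by apply/eqP => h; move: C1; rewrite h mulr0 => /eqP; rewrite eq_sym oner_eq0.
have ct k : (N1 < k)%N -> c k = 0.
  move=> /H1t; rewrite bc1 => /eqP; rewrite mulf_eq0 (negbTE a1) orbF => /eqP //.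
split => // n n2.
have [N [Hnt Hns]] := Hcomp n.
have n0 : (0 < n)%N by apply: leq_trans n2.
have bt k : b k * tcp a k n = b k * acp a k n - c k * a n.
  by rewrite acp_tcp // /c; ring.
exists (maxn N N1); split.
  move=> k; rewrite gtn_max => /andP[kN kN1].
  by rewrite bt Hnt // ct // mul0r subr0.
have E1 : \sum_(k < (maxn N N1).+1) b k * acp a k n = 0.
  rewrite (@sum_ext _ (fun k => b k * acp a k n) N) ?leq_maxl // Hns.
  by case: n n2 {Hnt Hns bt n0} => [|[|]].
have E2 : (\sum_(k < (maxn N N1).+1) c k) * a 1%N = 1.
  by rewrite (@sum_ext _ c N1) ?leq_maxr.
have E3 : \sum_(1 <= k < (maxn N N1).+1) b k * tcp a k n
          = \sum_(k < (maxn N N1).+1) b k * tcp a k n.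
  by rewrite -(big_mkord xpredT (fun k => b k * tcp a k n)) (@big_ltn _ _ _ 0%N) //= mulr0 add0r.
rewrite E3.
under eq_bigr do rewrite bt.
rewrite sumrB E1 -mulr_suml sub0r mulrN mulNr opprK mulrA [a 1%N * _]mulrC E2 mul1r.
by [].
Qed.
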